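(* For any coprime $r>1$ and $0<a<r$, on the Danilov resolution of $\frac1r(1,a,r-a)$ one has $R_1=D_X-E_1$, i.e. $R_1=\sum_{i=0}^r e_1^*(p_i)D_i$.
   Context: Notation: for integers $s$ and $t>0$, $\langle s\rangle_t$ is the least non-negative integer congruent to $s$ modulo $t$. A pair of integers $(r,a)$ is admissible if $r\ge1$, $0\le a<r$, $\gcd(r,a)=1$ (so $a=0$ only for $r=1$). For admissible $(r,a)$ put $N(r,a)=\mathbb Z^3+\mathbb Z\cdot\frac1r(1,a,r-a)\subset\mathbb Q^3$; $e_1,e_2,e_3$ is the standard basis, $e_j^*$ the $j$-th coordinate function, and $\Delta(r,a)$ the cone spanned by $e_1,e_2,e_3$. Let $b$ be an inverse of $a$ modulo $r$ and $p_i=\frac1r(\langle -ib\rangle_r,r-i,i)$, $i=0,\dots,r$ (so $p_0=e_2$, $p_r=e_3$, $p_{r-a}=\frac1r(1,a,r-a)$). For $r>1$ let $(r_L,a_L)=(r-a,\langle r\rangle_{r-a})$, $(r_R,a_R)=(a,\langle -r\rangle_a)$; there are lattice isomorphisms $L:N(r_L,a_L)\to N(r,a)$, $R:N(r_R,a_R)\to N(r,a)$ with $L(e_1)=e_1$, $L(e_2)=e_2$, $L(e_3)=p_{r-a}$, $R(e_1)=e_1$, $R(e_2)=p_{r-a}$, $R(e_3)=e_3$. The Danilov fan $\Sigma(r,a)$ is defined recursively: $\Sigma(1,0)$ is $\Delta(1,0)$ with its faces; for $r>1$, $\Sigma(r,a)$ consists of the cone spanned by $e_2,e_3,p_{r-a}$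 with its faces, together with $L(\Sigma(r_L,a_L))$ and $R(\Sigma(r_R,a_R))$. The Danilov resolution $Y$ is the smooth toric variety of $\Sigma(r,a)$, with torus $T$; its rays are spanned by $e_1,p_0,\dots,p_r$; $D_i$ is the $T$-invariant prime divisor of the ray through $p_i$ and $E_j$ that of $e_j$. The permutation $\tau(r,a,\cdot)$ of $\{0,\dots,r-1\}$: if $a\in\{1,r-1\}$, $\tau(r,a,i)=\langle ai-1\rangle_r$; otherwise $\tau(r,a,i)=\tau(r-a,\langle r\rangle_{r-a},\langle i\rangle_{r-a})$ for $i\ge a$ and $\tau(r,a,i)=(r-a)+\tau(a,\langle -r\rangle_a,i)$ for $i<a$. With indices mod $r$, define $Z_i=\sum_{k=\tau(r,a,i)+1}^{r}D_k$ ($i=0,\dots,r-1$). Define the $\mathbb Q$-divisors $D_X=E_1+\sum_{i=0}^r e_1^*(p_i)D_i$, $D_Z=\sum_{i=0}^r e_3^*(p_i)D_i$, and let $R_0,\dots,R_{r-1}$ be the unique $\mathbb Q$-divisors with $R_0=0$ and $Z_i=D_Z+R_i-R_{i-a}$ for all $i$ (indices mod $r$). *)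

(* Defs.v *)
From HB Require Import structures.
From mathcomp Require Import all_boot all_order all_algebra.
Set Implicit Arguments. Unset Strict Implicit. Unset Printing Implicit Defensive.
Import Order.TTheory GRing.Theory Num.Theory.
Local Open Scope ring_scope.

(* T-invariant Q-divisors on the Danilov resolution Y of 1/r(1,a,r-a):
   the rays of Sigma(r,a) are e_1, p_0, ..., p_r (pairwise distinct), so a
   T-invariant Q-divisor is a Q-combination of E_1 (index None) and
   D_0, ..., D_r (index Some i). *)
Definition divisor (r : nat) := {ffun option 'I_r.+1 -> rat}.

Definition E1_coef (r : nat) (x : option 'I_r.+1) : rat :=
  match x with None => 1 | Some _ => 0 end.
Definition E1 (r : nat) : divisor r := finfun (@E1_coef r).

Definition Dd_coef (r i : nat) (x : option 'I_r.+1) : rat :=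
  match x with Some j => if (nat_of_ord j == i)%N then 1 else 0 | None => 0 end.
Definition Dd (r : nat) (i : nat) : divisor r := finfun (@Dd_coef r i).

Definition dscale (r : nat) (c : rat) (D : divisor r) : divisor r :=
  [ffun x => c * D x].

(* <s>_t for s = -n (n : nat), t > 0 *)
Definition modneg (n t : nat) : nat := ((t - n %% t) %% t)%N.

(* coordinates of p_i = 1/r (<-ib>_r, r-i, i) *)
Definition e1p (r b i : nat) : rat := (modneg (i * b) r)%:R / r%:R.
Definition e3p (r i : nat) : rat := i%:R / r%:R.

Definition DX (r b : nat) : divisor r :=
  E1 r + \sum_(i < r.+1) dscale (e1p r b i) (Dd r i).

Definition DZ (r : nat) : divisor r :=
  \sum_(i < r.+1) dscale (e3p r i) (Dd r i).

(* The permutation tau(r,a,.), by recursion on r (with fuel n >= r). *)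
Fixpoint tau_aux (n r a i : nat) : nat := (
  match n with
  | 0 => 0
  | n'.+1 =>
      if (a == 1)%N || (a == r.-1)%N then (a * i + r - 1) %% r
      else if (a <= i)%N then tau_aux n' (r - a) (r %% (r - a)) (i %% (r - a))
      else r - a + tau_aux n' a (modneg r a) i
  end)%N.

Definition tau (r a i : nat) : nat := tau_aux r r a i.

Definition Zdiv (r a i : nat) : divisor r :=
  \sum_(k < r.+1 | (tau r a i < k)%N) Dd r k.

(* R_0, ..., R_{r-1} (given as a function on nat, only the values at
   0..r-1 matter) satisfy R_0 = 0 and Z_i = D_Z + R_i - R_{i-a} (mod r). *)
Definition R_spec (r a : nat) (R : nat -> divisor r) : Prop :=
  R 0%N = 0 /\
  forall i : nat, (i < r)%N ->
    Zdiv r a i = DZ r + R i - R ((i + (r - a)) %% r)%N.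

(* Main.v *)
Require Import Defs.
From HB Require Import structures.
From mathcomp Require Import all_boot all_order all_algebra.
From mathcomp Require Import zify ring.
Import Order.TTheory GRing.Theory Num.Theory.

Open Scope nat_scope.



Definition ce (n d i : nat) : nat := (i * n + d - 1) %/ d.
Definition chi (n d i : nat) : nat := ce n d i - ce n d (i - 1).

Lemma divq d q t : t < d -> (q * d + t) %/ d = q.
Proof. move=> h; rewrite divnMDl ?(divn_small h) ?addn0 //; lia. Qed.

Lemma ceil_uniq d x q : 0 < d -> x <= q * d -> q * d < x + d -> (x + d - 1) %/ d = q.
Proof.
move=> d0 h1 h2.
have -> : x + d - 1 = q * d + (x + d - 1 - q * d) by lia.
apply: divq; lia.
Qed.

Lemma ceil_spec d x : 0 < d -> x <= ((x + d - 1) %/ d) * d /\ ((x + d - 1) %/ d) * d < x + d.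
Proof.
move=> d0; have := divn_eq (x + d - 1) d; have := ltn_pmod (x + d - 1) d0.
set q := _ %/ _; set t := _ %% _; lia.
Qed.

Lemma ce0 n d : 0 < d -> ce n d 0 = 0.
Proof. by move=> d0; rewrite /ce mul0n add0n divn_small //; lia. Qed.

Lemma ceS n d q j : 0 < d -> ce n d (q * d + j) = q * n + ce n d j.
Proof.
move=> d0; rewrite /ce.
have -> : (q * d + j) * n + d - 1 = (q * n) * d + (j * n + d - 1) by nia.
by rewrite divnMDl.
Qed.

Lemma ce_self n d : 0 < d -> n < d -> ce n d d = n.
Proof.
move=> d0 nd; rewrite /ce; apply: ceil_uniq => //; nia.
Qed.

Lemma chi_mod n d i : 0 < d -> n < d -> chi n d i = chi n d (i %% d).
Proof.
move=> d0 nd; rewrite {1}(divn_eq i d); set q := i %/ d; set j := i %% d.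
have jd : j < d by apply: ltn_pmod.
case: (posnP j) => [j0|jp].
  rewrite j0 addn0 /chi sub0n ce0 //.
  case: (posnP q) => [->|qp]; first by rewrite mul0n ce0.
  have -> : q * d - 1 = (q - 1) * d + (d - 1) by nia.
  rewrite ceS //.
  have -> : ce n d (d - 1) = n.
    rewrite /ce; apply: ceil_uniq => //; nia.
  rewrite -[q * d]addn0 ceS // ce0 //; nia.
rewrite /chi.
have -> : q * d + j - 1 = q * d + (j - 1) by lia.
rewrite !ceS //; lia.
Qed.

Lemma ar2 s r B b i q : 0 < s -> r*B = s*b + 1 -> i*B <= q*s -> q*s < i*B + s -> i < r ->
  i*b <= q*r /\ q*r < i*b + r.
Proof.
move=> s0 e h1 h2 ir.
have k : (i*B)*r = s*(i*b) + i by have := congr1 (muln i) e; lia.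
have k1 : (i*B)*r <= (q*s)*r by rewrite leq_mul2r h1 orbT.
have k2 : (q*s)*r + r <= (i*B)*r + s*r by have := leq_mul h2 (leqnn r); lia.
split.
  rewrite -(leq_pmul2l s0); lia.
rewrite -(ltn_pmul2l s0); lia.
Qed.

Lemma ar3 a r x B m c q : 0 < a -> a < r -> m <= a ->
  a*x + (a - m) = a*B*r + m*c*r -> m*c <= q*a -> q*a < m*c + a ->
  x <= (B+q)*r /\ (B+q)*r < x + r.
Proof.
move=> a0 ar ma e h1 h2.
have k1 : (m*c)*r <= (q*a)*r by rewrite leq_mul2r h1 orbT.
have k2 : (q*a)*r + r <= (m*c)*r + a*r by have := leq_mul h2 (leqnn r); lia.
split.
  rewrite -(leq_pmul2l a0); lia.
rewrite -(ltn_pmul2l a0); lia.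
Qed.

Lemma ar1 a r b c i q : 0 < a -> a < r -> i < a -> a*b = c*r + 1 ->
  i*c + 1 <= q*a -> q*a < i*c + a ->
  i*b <= q*r /\ q*r < i*b + r.
Proof.
move=> a0 ar ia e h1 h2.
have k : a*(i*b) = (i*c)*r + i by have := congr1 (muln i) e; lia.
have k1 : (i*c+1)*r <= (q*a)*r by rewrite leq_mul2r h1 orbT.
have k2 : (q*a)*r + r <= (i*c)*r + a*r by have := leq_mul h2 (leqnn r); lia.
split.
  rewrite -(leq_pmul2l a0); lia.
rewrite -(ltn_pmul2l a0); lia.
Qed.


Section Step.
Variables (r a b c : nat).
Hypotheses (ha : 1 < a) (har : a.+1 < r) (hbr : b < r) (hab : a * b = c * r + 1).

Lemma c_bounds : 0 < c /\ c < a /\ c < b /\ b - c < r - a.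
Proof. nia. Qed.

Lemma modL : (r %% (r - a)) * (b - c) %% (r - a) = 1.
Proof.
have e : r = a + (r - a) by lia.
rewrite {1}e modnDr modnMml.
have -> : a * (b - c) = c * (r - a) + 1 by nia.
rewrite modnMDl modn_small //; lia.
Qed.

Lemma modR : modneg r a * c %% a = 1 /\ 0 < modneg r a.
Proof.
rewrite /modneg.
have a0 : 0 < a by lia.
have hr := divn_eq r a; set u := r %/ a in hr; set v := r %% a in hr *.
have va : v < a by apply: ltn_pmod.
have v0 : 0 < v.
  case: (posnP v) => // v0; exfalso.
  have : (a * b) %% a = (c * r + 1) %% a by rewrite hab.
  rewrite hr v0 addn0 mulnC modnMl mulnA modnMDl modn_small //.
have -> : (a - v) %% a = a - v by rewrite modn_small; lia.
split; last lia.
have -> : (a - v) * c = (c + c * u - b) * a + 1.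
  have := hab; rewrite hr => h.
  have h1 : c * u < b by nia.
  have h2 : a * (b - c * u) = c * v + 1 by nia.
  have h3 : b - c * u <= c by nia.
  nia.
rewrite modnMDl modn_small //.
Qed.


Lemma CE2 i : i < r -> ce b r i = ce (b - c) (r - a) i.
Proof.
move=> ir; have [c0 [ca [cb bcs]]] := c_bounds.
have s0 : 0 < r - a by lia.
have [h1 h2] := ceil_spec (r - a) (i * (b - c)) s0.
rewrite /ce; set q := (_ %/ (r - a)) in h1 h2 *.
have e : r * (b - c) = (r - a) * b + 1 by nia.
have [g1 g2] := ar2 _ _ _ _ _ _ s0 e h1 h2 ir.
apply: ceil_uniq => //; lia.
Qed.

Lemma CE3 m : m <= a -> ce b r (r - a + m) = b - c + ce c a m.
Proof.
move=> ma; have [c0 [ca [cb bcs]]] := c_bounds.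
have a0 : 0 < a by lia.
have [h1 h2] := ceil_spec a (m * c) a0.
rewrite /ce; set q := (_ %/ a) in h1 h2 *.
have e : a * ((r - a + m) * b) + (a - m) = a * (b - c) * r + m * c * r.
  have e1 : a * b - c * a = c * (r - a) + 1 by nia.
  nia.
have [g1 g2] := ar3 _ _ _ _ _ _ _ a0 (ltnW har) ma e h1 h2.
apply: ceil_uniq => //; lia.
Qed.

Lemma CE1 i : i < a -> ce b r i = ce c a i.
Proof.
move=> ia; have [c0 [ca [cb bcs]]] := c_bounds.
have a0 : 0 < a by lia.
case: (posnP i) => [->|ip]; first by rewrite !ce0 //; lia.
have [h1 h2] := ceil_spec a (i * c) a0.
rewrite /ce; set q := (_ %/ a) in h1 h2 *.
have [hm _] := modR.
have hw := divn_eq (modneg r a * c) a; rewrite hm in hw.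
set w := _ %/ a in hw.
have strict : i * c < q * a.
  rewrite ltn_neqAle h1 andbT; apply/negP => /eqP e.
  have : (i * (modneg r a * c)) %% a = (q * modneg r a * a) %% a.
    congr (_ %% _); have := congr1 (muln (modneg r a)) e; lia.
  rewrite modnMl hw mulnDr muln1 => h.
  have : (i * (w * a) + i) %% a = i by rewrite mulnA modnMDl modn_small.
  lia.
have strict1 : i * c + 1 <= q * a by rewrite addn1.
have [g1 g2] := ar1 _ _ _ _ _ _ a0 (ltnW har) ia hab strict1 h2.
apply: ceil_uniq => //; lia.
Qed.

End Step.


Lemma sum_lt_min r k : \sum_(i < r) nat_of_bool (i < k) = minn k r.
Proof.
elim: r => [|r IH]; first by rewrite big_ord0; lia.
rewrite big_ord_recr /= IH; case: (ltnP r k) => h /=; lia.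
Qed.

Lemma sum_mod s (G : nat -> nat) m :
  \sum_(m <= i < m + s) G (i %% s) = \sum_(0 <= i < s) G i.
Proof.
elim: m => [|m IH].
  by rewrite add0n; apply: eq_big_nat => i /andP [_ h]; rewrite modn_small.
have e1 := @big_ltn _ 0 addn m (m + s).+1 (fun i => G (i %% s)) (leq_addr _ _ : m < (m + s).+1).
rewrite big_nat_recr /= ?leq_addr // IH modnDr in e1.
rewrite addSn; apply/eqP; rewrite -(eqn_add2l (G (m %% s))) -e1 addnC //.
Qed.

Lemma tau_lt n : forall r a i, 0 < r -> a < r -> tau_aux n r a i < r.
Proof.
elim: n => [|n IH] r a i r0 ar //=.
case: ifP => _; first by rewrite ltn_pmod.
case: ifP => h.
  have s0 : 0 < r - a by lia.
  have := IH (r - a) (r %% (r - a)) (i %% (r - a)) s0 (ltn_pmod _ s0); lia.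
have a0 : 0 < a by lia.
have := IH a (modneg r a) i a0 (ltn_pmod _ a0); lia.
Qed.

Lemma split_gen r a (F FL FR : nat -> nat) : a <= r ->
  (forall i, i < a -> F i = FR i) -> (forall i, a <= i < r -> F i = FL (i %% (r - a))) ->
  \sum_(i < r) F i = \sum_(i < a) FR i + \sum_(i < r - a) FL i.
Proof.
move=> ar hR hL.
rewrite -(big_mkord xpredT) (big_cat_nat _ (n := a)) //= big_mkord.
rewrite -(big_mkord xpredT FL) -(sum_mod (r - a) FL a) subnKC //.
congr (_ + _).
  by apply: eq_bigr => i _; apply: hR.
by apply: eq_big_nat => i /andP [h1 h2]; apply: hL; rewrite h1 h2.
Qed.


Lemma base1 r k : 1 < r -> k <= r ->
  \sum_(i < r) nat_of_bool ((1 * i + r - 1) %% r < k) = k /\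
  \sum_(i < r) chi 1 r i * nat_of_bool ((1 * i + r - 1) %% r < k) = ce 1 r k.
Proof.
move=> r1 kr; have [r' er] : exists r', r = r'.+1 by exists r.-1; lia.
subst r.
have e0 : (1 * 0 + r'.+1 - 1) %% r'.+1 = r' by rewrite modn_small; lia.
have eS : forall i : 'I_r', (1 * (lift ord0 i) + r'.+1 - 1) %% r'.+1 = i.
  move=> i; rewrite lift0 mul1n.
  have -> : i.+1 + r'.+1 - 1 = i + r'.+1 by lia.
  by rewrite modnDr modn_small // ltnS ltnW.
split.
  rewrite big_ord_recl /= e0.
  under eq_bigr => i _ do rewrite eS.
  rewrite sum_lt_min; case: (ltnP r' k) => /= h; lia.
have ch : forall i, i <= r'.+1 -> ce 1 r'.+1 i = (0 < i).
  move=> i ir; rewrite /ce; apply: ceil_uniq => //; case: (posnP i) => /= h; lia.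
rewrite big_ord_recl /= e0 /chi ch // sub0n ch // mul0n add0n.
have [r'' er'] : exists r'', r' = r''.+1 by exists r'.-1; lia.
subst r'.
rewrite big_ord_recl /= big1.
  rewrite addn0 /bump /= !ch // mul1n.
  have -> : (1 + r''.+2 - 1) %% r''.+2 = 0 by rewrite addnC addnK modnn.
  by case: (posnP k) => /= h; lia.
move=> i _; rewrite /bump /= add1n add1n !ch //; try (have := ltn_ord i; lia).
Qed.

Lemma base2 r k : 1 < r -> k <= r ->
  \sum_(i < r) nat_of_bool ((r.-1 * i + r - 1) %% r < k) = k /\
  \sum_(i < r) chi r.-1 r i * nat_of_bool ((r.-1 * i + r - 1) %% r < k) = ce r.-1 r k.
Proof.
move=> r1 kr.
have e : forall i : 'I_r, (r.-1 * rev_ord i + r - 1) %% r = i.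
  move=> i; have ir := ltn_ord i; rewrite /=.
  have -> : r.-1 * (r - i.+1) + r - 1 = (r - i.+1) * r + i by nia.
  by rewrite modnMDl modn_small.
have ch : forall i, i < r -> ce r.-1 r i = i.
  move=> i ir; rewrite /ce; apply: ceil_uniq; lia.
split.
  rewrite (reindex_inj rev_ord_inj) /=.
  under eq_bigr => i _ do rewrite e.
  rewrite sum_lt_min; lia.
rewrite (reindex_inj rev_ord_inj) /=.
under eq_bigr => i _ do rewrite e.
have -> : ce r.-1 r k = minn k r.-1.
  rewrite /ce; apply: ceil_uniq; first lia; case: (ltnP k r) => h; nia.
have -> : minn k r.-1 = minn (minn k r.-1) r by lia.
rewrite -(sum_lt_min r (minn k r.-1)).
apply: eq_bigr => i _; have ir := ltn_ord i.
rewrite /chi !ch; try lia.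
Qed.


Lemma core n : forall r a b, 1 < r -> r <= n -> 0 < a -> a < r -> b < r -> a * b %% r = 1 ->
  forall k, k <= r ->
  \sum_(i < r) nat_of_bool (tau_aux n r a i < k) = k /\
  \sum_(i < r) chi b r i * nat_of_bool (tau_aux n r a i < k) = ce b r k.
Proof.
elim: n => [|n IH] r a b r1 rn a0 ar br hab k kr; first lia.
case hc: ((a == 1) || (a == r.-1)).
  have et : forall i, tau_aux n.+1 r a i = (a * i + r - 1) %% r by move=> i; rewrite /= hc.
  under eq_bigr => i _ do rewrite et.
  under [X in _ /\ X = _]eq_bigr => i _ do rewrite et.
  case/orP: hc => /eqP ea; subst a.
    have eb : b = 1 by move: hab; rewrite mul1n modn_small.
    subst b; exact: base1.
  have eb : b = r.-1.
    have h1 : (r.-1 * b + b) %% r = 0.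
      have -> : r.-1 * b + b = b * r by nia.
      by rewrite modnMl.
    rewrite -modnDml hab in h1.
    have : 1 + b <= r by lia.
    rewrite leq_eqVlt => /orP [/eqP|h2]; first lia.
    by rewrite modn_small in h1.
  subst b; exact: base2.
have a2 : 1 < a by move: hc; case: (ltngtP a 1) => //; lia.
have ar2 : a.+1 < r by move: hc; case: (ltngtP a r.-1) => /=; rewrite ?orbT //; lia.
set s := r - a.
have et : forall i, tau_aux n.+1 r a i = if a <= i then tau_aux n s (r %% s) (i %% s)
   else s + tau_aux n a (modneg r a) i by move=> i; rewrite /= hc.
set c := a * b %/ r.
have habc : a * b = c * r + 1 by rewrite {1}(divn_eq (a * b) r) hab.
have es : s = r - a by [].
clearbody c s; clear hab hc.
have [c0 [ca [cb bcs]]] := c_bounds r a b c a2 ar2 br habc; rewrite -es in bcs.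
have mL := modL r a b c a2 ar2 br habc; rewrite -es in mL.
have [mR mR0] := modR r a b c a2 ar2 br habc.
have s1 : 1 < s by lia.
have aL0 : 0 < r %% s.
  case: (posnP (r %% s)) => // h; move: mL; rewrite h mul0n mod0n //.
have [IL1 IL2] := IH s (r %% s) (b - c) s1 (ltac:(lia)) aL0 (ltn_pmod _ (ltnW s1))
   bcs mL (minn k s) (geq_minr _ _).
have [IR1 IR2] := IH a (modneg r a) c a2 (ltac:(lia)) mR0 (ltn_pmod _ (ltnW a2)) ca mR (k - s)
   (ltac:(lia)).
have tL : forall j, j < s -> (tau_aux n s (r %% s) j < k) = (tau_aux n s (r %% s) j < minn k s).
  move=> j js; have := tau_lt n s (r %% s) j (ltnW s1) (ltn_pmod _ (ltnW s1)).
  by case: (ltnP k s) => h1 h2; apply/idP/idP; lia.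
have tR : forall i, (s + tau_aux n a (modneg r a) i < k) = (tau_aux n a (modneg r a) i < k - s).
  by move=> i; apply/idP/idP; lia.
split.
  rewrite (@split_gen r a (fun i => nat_of_bool (tau_aux n.+1 r a i < k))
    (fun j => nat_of_bool (tau_aux n s (r %% s) j < minn k s))
    (fun i => nat_of_bool (tau_aux n a (modneg r a) i < k - s))); first 1 last.
  - lia.
  - by move=> i ia; rewrite et (leqNgt a i) ia /= tR.
  - move=> i /andP [h1 h2]; by rewrite -es et h1 (tL _ (ltn_pmod _ (ltnW s1))).
  rewrite -es IL1 IR1; lia.
rewrite (@split_gen r a (fun i => chi b r i * nat_of_bool (tau_aux n.+1 r a i < k))
    (fun j => chi (b - c) s j * nat_of_bool (tau_aux n s (r %% s) j < minn k s))
    (fun i => chi c a i * nat_of_bool (tau_aux n a (modneg r a) i < k - s))); first 1 last.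
- lia.
- move=> i ia; rewrite et (leqNgt a i) ia /= tR; congr (_ * _).
  rewrite /chi !(CE1 r a b c a2 ar2 br habc) //; lia.
- move=> i /andP [h1 h2]; rewrite -es et h1 (tL _ (ltn_pmod _ (ltnW s1))).
  congr (_ * _); rewrite -chi_mod; try lia.
  rewrite /chi !(CE2 r a b c a2 ar2 br habc) -?es //; lia.
rewrite -es IL2 IR2.
case: (leqP k s) => h.
  rewrite ?(minn_idPl h) (_ : k - s = 0) ?ce0; try lia.
  rewrite (CE2 r a b c a2 ar2 br habc) -?es //; lia.
rewrite ?(minn_idPr (ltnW h)) ce_self; try lia.
have -> : k = s + (k - s) by lia.
rewrite addKn es (CE3 r a b c a2 ar2 br habc) //; lia.
Qed.


Lemma ceil_qt d q t : 0 < d -> t < d -> (q * d + t + d - 1) %/ d = q + (0 < t).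
Proof.
move=> d0 td; apply: ceil_uniq => //; case: (posnP t) => h /=; nia.
Qed.

Lemma chi_char r b i : 0 < b -> b < r -> i < r ->
  chi b r i = ((0 < (i * b) %% r) && ((i * b) %% r <= b)).
Proof.
move=> b0 br ir; have r0 : 0 < r by lia.
case: (posnP i) => [->|ip]; first by rewrite /chi sub0n subnn mul0n mod0n.
rewrite /chi /ce mulnBl mul1n.
have e := divn_eq (i * b) r; have tr := ltn_pmod (i * b) r0.
move: e tr; set x := i * b; set q := x %/ r; set t := x %% r => e tr.
rewrite e ceil_qt //.
have [h|h] := leqP b t.
  have -> : q * r + t - b = q * r + (t - b) by lia.
  rewrite ceil_qt //; last lia.
  have t0 : 0 < t by lia.
  rewrite t0 /=.
  case: (posnP (t - b)) => h2 /=; lia.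
have q0 : 0 < q by nia.
have -> : q * r + t - b = (q - 1) * r + (r + t - b) by nia.
rewrite ceil_qt //; last lia.
have -> : 0 < r + t - b by lia.
rewrite (ltnW h) andbT.
case: (posnP t) => h1 /=; lia.
Qed.

Lemma sum_succ (R : Type) (idx : R) (op : Monoid.com_law idx) r l (F : nat -> R) : l.+1 < r ->
  \big[op/idx]_(l' < r | (0 < l') && (l' <= l.+1)) F l' =
  op (F l.+1) (\big[op/idx]_(l' < r | (0 < l') && (l' <= l)) F l').
Proof.
move=> h; rewrite (bigD1 (Ordinal h)) /=; last by [].
congr (op _ _); apply: eq_bigl => i /=.
rewrite -val_eqE /=; case: (ltngtP i l.+1) => /= h1; lia.
Qed.

Local Open Scope ring_scope.



Lemma sum_dscale_coef r (f : nat -> rat) (x : option 'I_r.+1) :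
  (\sum_(i < r.+1) dscale (f i) (Dd r i)) x = if x is Some j then f j else 0.
Proof.
rewrite sum_ffunE; case: x => [j|].
  rewrite (bigD1 j) //= big1 => [|i hi]; rewrite !ffunE /= ?eqxx ?mulr1 ?addr0 //.
  by rewrite val_eqE eq_sym (negbTE hi) mulr0.
by apply: big1 => i _; rewrite !ffunE /= mulr0.
Qed.

Lemma DZ_coef r (x : option 'I_r.+1) : DZ r x = if x is Some j then (j%:R / r%:R) else 0.
Proof. by rewrite /DZ sum_dscale_coef. Qed.

Lemma Zdiv_coef r a i (x : option 'I_r.+1) :
  Zdiv r a i x = if x is Some j then (nat_of_bool (tau r a i < j)%N)%:R else 0.
Proof.
rewrite /Zdiv sum_ffunE; case: x => [j|]; last by apply: big1 => k _; rewrite ffunE.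
case h: (tau r a i < j)%N.
  rewrite (bigD1 j) //= big1 => [|k /andP [_ hk]]; rewrite !ffunE /= ?eqxx ?addr0 //.
  by rewrite val_eqE eq_sym (negbTE hk).
apply: big1 => k hk; rewrite ffunE /=.
case: eqP => // e; rewrite -e in hk; by rewrite hk in h.
Qed.

Section Main.
Variables r a b : nat.
Hypotheses (hr : (1 < r)%N) (ha0 : (0 < a)%N) (har : (a < r)%N) (hb0 : (0 < b)%N)
  (hbr : (b < r)%N) (hab : (a * b %% r = 1)%N).

Definition Tdiv l := Zdiv r a ((l * a) %% r) - DZ r.
Definition Ssum l := \sum_(l' < r | ((0 < l') && (l' <= l))%N) Tdiv l'.

Lemma r0 : (0 < r)%N. Proof. lia. Qed.

Lemma invmod i : (i < r)%N -> (((i * b) %% r * a) %% r = i)%N.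
Proof.
move=> ir; rewrite modnMml -mulnA (mulnC b) -modnMmr hab muln1 modn_small //.
Qed.

Lemma invmod' l : (l < r)%N -> (((l * a) %% r * b) %% r = l)%N.
Proof.
move=> ir; rewrite modnMml -mulnA -modnMmr hab muln1 modn_small //.
Qed.

Lemma mod1 l : (((l.+1 * a) %% r + (r - a)) %% r = (l * a) %% r)%N.
Proof.
rewrite modnDml; have -> : (l.+1 * a + (r - a) = l * a + r)%N by rewrite mulSn; lia.
by rewrite modnDr.
Qed.

Lemma mod2 i : (i < r)%N ->
  ((((i + (r - a)) %% r) * b) %% r = ((i * b) %% r + r - 1) %% r)%N.
Proof.
move=> ir; set x := ((i + (r - a)) %% r)%N.
have e : (((x * b) %% r + 1) %% r = (i * b) %% r)%N.
  rewrite modnDml -{1}hab modnDmr -mulnDl -modnMml /x modnDml.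
  have -> : (i + (r - a) + a = i + r)%N by lia.
  by rewrite modnDr modnMml.
have yr := ltn_pmod (x * b) r0.
move: e yr; set y := ((x * b) %% r)%N => e yr.
case: (ltngtP (y + 1) r) => h.
- rewrite modn_small // in e; rewrite -e.
  have -> : (y + 1 + r - 1 = y + r)%N by lia.
  by rewrite modnDr modn_small.
- lia.
- rewrite h modnn in e; rewrite -e add0n modn_small; lia.
Qed.


Definition hmod (l : 'I_r) : 'I_r := Ordinal (ltn_pmod (l * a) r0).
Definition hinv (i : 'I_r) : 'I_r := Ordinal (ltn_pmod (i * b) r0).

Lemma hmod_inj : injective hmod.
Proof.
move=> l l' e; apply: ord_inj.
have := congr1 (fun x : 'I_r => ((x : nat) * b) %% r)%N e.
by rewrite /= !invmod' // ltn_ord.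
Qed.

Lemma hinv_inj : injective hinv.
Proof.
move=> l l' e; apply: ord_inj.
have := congr1 (fun x : 'I_r => ((x : nat) * a) %% r)%N e.
by rewrite /= !invmod // ltn_ord.
Qed.

Lemma reidx1 (f : nat -> nat) : (\sum_(l < r) f ((l * a) %% r) = \sum_(i < r) f i)%N.
Proof. by rewrite [RHS](reindex_inj hmod_inj). Qed.

Lemma reidx2 (f : nat -> nat) :
  (\sum_(l < r | (0 < l) && (l <= b)) f ((l * a) %% r) = \sum_(i < r) chi b r i * f i)%N.
Proof.
rewrite (reindex_inj hinv_inj) /= big_mkcond /=; apply: eq_bigr => i _.
rewrite invmod // chi_char //; case: ifP => _ /=; lia.
Qed.

Lemma S_succ l : (l.+1 < r)%N -> Ssum l.+1 = Tdiv l.+1 + Ssum l.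
Proof. by move=> h; rewrite /Ssum sum_succ. Qed.

Lemma S0 : Ssum 0 = 0.
Proof. by rewrite /Ssum big_pred0 // => i; apply/negbTE/negP; lia. Qed.

Lemma T_coef l (x : option 'I_r.+1) : Tdiv l x =
  if x is Some j then (nat_of_bool (tau r a ((l * a) %% r) < j)%N)%:R - j%:R / r%:R else 0.
Proof. by rewrite /Tdiv !ffunE Zdiv_coef DZ_coef; case: x => // ; rewrite subr0. Qed.

Lemma sumT : \sum_(l < r) Tdiv l = 0.
Proof.
apply/ffunP => x; rewrite sum_ffunE ffunE; case: x => [j|]; last first.
  by apply: big1 => l _; rewrite T_coef.
under eq_bigr => l _ do rewrite T_coef.
rewrite sumrB -natr_sum.
rewrite (reidx1 (fun i => nat_of_bool (tau r a i < j)%N)).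
have [c1 _] := core r r a b hr (leqnn r) ha0 har hbr hab j (ltn_ord j).
rewrite /tau c1 sumr_const card_ord -[_ *+ r]mulr_natr divfK ?subrr //.
by rewrite pnatr_eq0 -lt0n r0.
Qed.

Lemma T0S : Tdiv 0 + Ssum r.-1 = 0.
Proof.
rewrite -sumT (bigD1 (Ordinal r0)) //=; congr (_ + _).
apply: eq_bigl => i; rewrite -val_eqE /=; have := ltn_ord i.
case: (posnP (nat_of_ord i)) => h /= h2; lia.
Qed.

Lemma zsimp (V : zmodType) (x y z : V) : x + y - z - x + z = y.
Proof. by rewrite addrAC subrK addrC addKr. Qed.

Lemma uniqR R : R_spec a R -> forall l, (l < r)%N -> R ((l * a) %% r)%N = Ssum l.
Proof.
move=> [hR0 hR]; elim => [_|l IH hl]; first by rewrite mul0n mod0n hR0 S0.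
have := hR ((l.+1 * a) %% r)%N (ltn_pmod _ r0); rewrite mod1 IH ?(ltnW hl) // => e.
by rewrite S_succ // /Tdiv e zsimp.
Qed.

Lemma exR : R_spec a (fun i => Ssum ((i * b) %% r)%N).
Proof.
split; first by rewrite mul0n mod0n S0.
move=> i ir; rewrite mod2 //.
have hi := invmod i ir.
move: hi; set j := ((i * b) %% r)%N => hi.
case: (posnP j) => hj.
  have i0 : i = 0%N by rewrite -hi hj mul0n mod0n.
  have -> : ((j + r - 1) %% r = r.-1)%N by rewrite hj modn_small; lia.
  have e : Ssum r.-1 = - Tdiv 0 by apply/eqP; rewrite -addr_eq0 addrC T0S.
  rewrite e hj S0 /Tdiv mul0n mod0n i0 addr0 opprK addrC subrK //.
have -> : ((j + r - 1) %% r = j.-1)%N.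
  have -> : (j + r - 1 = j.-1 + r)%N by lia.
  rewrite modnDr modn_small //; have := ltn_pmod (i * b) r0; lia.
have jr : (j < r)%N by rewrite /j; apply: ltn_pmod; exact: r0.
rewrite -{1}(prednK hj) S_succ (prednK hj) //.
rewrite /Tdiv hi addrA addrK addrC subrK //.
Qed.

Lemma coefS l (j : 'I_r.+1) : (l < r)%N -> Ssum l (Some j) =
  (\sum_(l' < r | ((0 < l') && (l' <= l))%N) nat_of_bool (tau r a ((l' * a) %% r) < j)%N)%:R
  - l%:R * (j%:R / r%:R).
Proof.
elim: l => [_|l IH hl].
  rewrite S0 big_pred0 ?ffunE ?mul0r ?subr0 // => i; apply/negbTE/negP; lia.
rewrite S_succ // ffunE T_coef IH ?(ltnW hl) //. rewrite (@sum_succ _ _ _ r l (fun l' => nat_of_bool (tau r a ((l' * a) %% r) < j)%N)) //= natrD [l.+1%:R]mulrSr.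
ring.
Qed.

End Main.


Lemma final_nat r b b' j : (0 < r)%N -> b' = (b %% r)%N ->
  (ce b' r j * r = j * b' + modneg (j * b) r)%N.
Proof.
move=> r0 eb; rewrite /modneg -modnMmr -eb /ce.
have e := divn_eq (j * b') r; have tr := ltn_pmod (j * b') r0.
move: e tr; set q := ((j * b') %/ r)%N; set t := ((j * b') %% r)%N => e tr.
rewrite e ceil_qt //; case: (posnP t) => h /=.
  by rewrite h subn0 modnn; lia.
rewrite modn_small; lia.
Qed.

Theorem mainTheorem6 (r a b : nat)
  (hr : (1 < r)%N) (ha0 : (0 < a)%N) (har : (a < r)%N) (hcop : coprime r a)
  (hb : (a * b = 1 %[mod r])%N) :
  (exists R : nat -> divisor r, R_spec a R) /\
  (forall R : nat -> divisor r, R_spec a R ->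
     R 1%N = DX r b - E1 r /\
     R 1%N = \sum_(i < r.+1) dscale (e1p r b i) (Dd r i)).
Proof.
have r0 : (0 < r)%N by lia.
set b' := (b %% r)%N.
have hab' : ((a * b') %% r = 1)%N by rewrite /b' modnMmr hb modn_small.
have b'r : (b' < r)%N by apply: ltn_pmod.
have b'0 : (0 < b')%N.
  case: (posnP b') => // h; move: hab'; rewrite h muln0 mod0n //.
split; first by exists (fun i => Ssum r a ((i * b') %% r)%N); exact: (exR r a b' hr ha0 har b'0 b'r hab').
move=> R hR.
have e1 : R 1%N = Ssum r a b'.
  by have := uniqR r a b' hr ha0 har b'0 b'r hab' R hR b' b'r; rewrite mulnC hab'.
have e2 : R 1%N = \sum_(i < r.+1) dscale (e1p r b i) (Dd r i).
  rewrite e1; apply/ffunP => x; rewrite sum_dscale_coef; case: x => [j|]; last first.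
    by rewrite /Ssum sum_ffunE big1 // => l _; rewrite T_coef.
  rewrite (coefS r a b' hr ha0 har b'0 b'r hab') // (reidx2 r a b' hr ha0 har b'0 b'r hab' (fun i => nat_of_bool (tau r a i < j)%N)).
  have [_ c2] := core r r a b' hr (leqnn r) ha0 har b'r hab' j (ltn_ord j).
  rewrite /tau c2 /e1p.
  have := final_nat r b b' j r0 (erefl b'); set c := ce b' r j; set m := modneg (j * b) r => en.
  have enR : (c%:R * r%:R = j%:R * b'%:R + m%:R :> rat) by rewrite -!natrM -natrD en.
  have rnz : (r%:R != 0 :> rat) by rewrite pnatr_eq0 -lt0n.
  have -> : (m%:R = c%:R * r%:R - j%:R * b'%:R :> rat) by rewrite enR; ring.
  by field.
split => //; rewrite e2 /DX addrAC subrr add0r //.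
Qed.
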